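(* Let $A\in\mathfrak{B}_{n\times m}$ be a semi-canonical matrix with $r(A)=\langle x_1,\dots,x_n\rangle$ and $c(A)=\langle y_1,\dots,y_m\rangle$. Then there exist integers $s,t$ with $0\le s\le m$, $0\le t\le n$ such that $x_1=2^s-1$ and $y_1=2^t-1$.
   Context: $\mathfrak{B}_{n\times m}$ denotes the set of all $n\times m$ matrices with entries in $\{0,1\}$. For $A=[a_{ij}]\in\mathfrak{B}_{n\times m}$, $r(A)=\langle x_1,\dots,x_n\rangle$ with $x_i=\sum_{j=1}^m a_{ij}2^{m-j}$ and $c(A)=\langle y_1,\dots,y_m\rangle$ with $y_j=\sum_{i=1}^n a_{ij}2^{n-i}$. $A$ is semi-canonical if $x_1\le x_2\le\cdots\le x_n$ and $y_1\le y_2\le\cdots\le y_m$. *)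

(* Defs.v *)
From mathcomp Require Import all_boot all_algebra.
Set Implicit Arguments. Unset Strict Implicit. Unset Printing Implicit Defensive.

(* A binary n x m matrix: entries in {0,1}, represented by bool
   (true = 1, false = 0). Indices are 0-based: paper row i = ordinal i-1. *)
Definition binmx (n m : nat) := 'M[bool]_(n, m).

(* x_i = sum_j a_ij 2^(m-j) with 1-based j; with 0-based j : 'I_m this is 2^(m - (j+1)). *)
Definition rowval n m (A : binmx n m) (i : 'I_n) : nat :=
  \sum_(j < m) (A i j : nat) * 2 ^ (m - j.+1).

Definition colval n m (A : binmx n m) (j : 'I_m) : nat :=
  \sum_(i < n) (A i j : nat) * 2 ^ (n - i.+1).

Definition semi_canonical n m (A : binmx n m) : Prop :=
  (forall i1 i2 : 'I_n, (i1 <= i2)%N -> (rowval A i1 <= rowval A i2)%N) /\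
  (forall j1 j2 : 'I_m, (j1 <= j2)%N -> (colval A j1 <= colval A j2)%N).

(* Main.v *)
Require Import Defs.
From mathcomp Require Import all_boot all_algebra.
From mathcomp Require Import zify.

Definition S (k : nat) (f : nat -> bool) : nat :=
  \sum_(i < k) (f i : nat) * 2 ^ (k - i.+1).

Lemma S_recl k f : S k.+1 f = (f 0 : nat) * 2 ^ k + S k (fun i => f i.+1).
Proof.
rewrite /S big_ord_recl /= subn1 /=; congr (_ + _); apply: eq_bigr => i _; by rewrite /bump /= add1n subSS.
Qed.

Lemma S_lt k (f : nat -> bool) : S k f < 2 ^ k.
Proof.
elim: k f => [|k IH] f; first by rewrite /S big_ord0.
rewrite S_recl expnS; have := IH (fun i => f i.+1).
case: (f 0) => /=; lia.
Qed.

Lemma S_all k (f : nat -> bool) : (forall i, i < k -> f i) -> S k f = 2 ^ k - 1.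
Proof.
elim: k f => [|k IH] f H; first by rewrite /S big_ord0.
rewrite S_recl H // IH; last by move=> i Hi; apply: H.
rewrite expnS /=; have := expn_gt0 2 k; lia.
Qed.

Lemma S_mono k (f : nat -> bool) : (forall i j, i <= j -> j < k -> f i -> f j) ->
  exists s, s <= k /\ S k f = 2 ^ s - 1.
Proof.
elim: k f => [|k IH] f H; first by exists 0; rewrite /S big_ord0.
case Hf0: (f 0).
  exists k.+1; split => //; apply: S_all => i Hi; exact: (H 0).
have [s [Hs E]] := IH (fun i => f i.+1) (fun i j a b c => H i.+1 j.+1 a b c).
exists s; split; first lia.
by rewrite S_recl Hf0 E.
Qed.

Lemma colS n m (A : binmx n.+1 m.+1) j :
  colval A j = S n.+1 (fun i => A (inord i) j).
Proof. by apply: eq_bigr => i _; rewrite inord_val. Qed.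

Lemma rowS n m (A : binmx n.+1 m.+1) i :
  rowval A i = S m.+1 (fun j => A i (inord j)).
Proof. by apply: eq_bigr => j _; rewrite inord_val. Qed.

Lemma top_mono k (f g : nat -> bool) : S k.+1 f <= S k.+1 g -> f 0 -> g 0.
Proof.
rewrite !S_recl => H Hf; apply/negPn/negP => Hg.
move: H; rewrite Hf (negbTE Hg) /=.
have := S_lt k (fun i => g i.+1); lia.
Qed.

Theorem corollary1 (n m : nat) (A : binmx n.+1 m.+1) :
  semi_canonical A ->
  exists s t : nat, (s <= m.+1)%N /\ (t <= n.+1)%N /\
    rowval A ord0 = (2 ^ s - 1)%N /\ colval A ord0 = (2 ^ t - 1)%N.
Proof.
move=> [Hr Hc].
have E0n : (inord 0 : 'I_n.+1) = ord0 by apply: val_inj; rewrite /= inordK.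
have E0m : (inord 0 : 'I_m.+1) = ord0 by apply: val_inj; rewrite /= inordK.
have [s [Hs Es]] : exists s, s <= m.+1 /\ S m.+1 (fun j => A ord0 (inord j)) = 2 ^ s - 1.
  apply: S_mono => i j Hij Hj Hi.
  have Hik : i < m.+1 by lia.
  have := Hc (inord i) (inord j); rewrite !inordK // => /(_ Hij).
  rewrite !colS => /top_mono; rewrite /= E0n; exact.
have [t [Ht Et]] : exists t, t <= n.+1 /\ S n.+1 (fun i => A (inord i) ord0) = 2 ^ t - 1.
  apply: S_mono => i j Hij Hj Hi.
  have Hik : i < n.+1 by lia.
  have := Hr (inord i) (inord j); rewrite !inordK // => /(_ Hij).
  rewrite !rowS => /top_mono; rewrite /= E0m; exact.
by exists s, t; rewrite rowS colS Es Et.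
Qed.
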